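(* Let $H$ be the 28-element set $H=\{n_M : n\in\mathbb{Z}_{12}\}\cup\{n_m : n\in\mathbb{Z}_{12}\}\cup\{n_{\mathrm{aug}} : n\in\{0,1,2,3\}\}$. Let $\mathcal{S}$ be the symmetric relation on $H$ consisting exactly of the pairs $(n_M,n_m)$, $(n_M,(n+4)_m)$, $(n_M,(n\bmod 4)_{\mathrm{aug}})$, $(n_m,n_M)$, $(n_m,(n+8)_M)$, $(n_m,((n+3)\bmod 4)_{\mathrm{aug}})$ for $n\in\mathbb{Z}_{12}$ together with their reverses, and let $\mathcal{T}$ be the symmetric relation on $H$ consisting exactly of the pairs $(n_M,(n+4)_M)$, $(n_M,(n+8)_M)$, $(n_M,(n+1)_m)$, $(n_M,(n+5)_m)$, $(n_M,((n+3)\bmod 4)_{\mathrm{aug}})$, $(n_m,(n+4)_m)$, $(n_m,(n+8)_m)$, $(n_m,(n+11)_M)$, $(n_m,(n+7)_M)$, $(n_m,(n\bmod 4)_{\mathrm{aug}})$ for $n\in\mathbb{Z}_{12}$ together with their reverses. Then the monoid $M_{\mathcal{ST}}$ of relations on $H$ generated by $\mathcal{S}$ and $\mathcal{T}$ under composition of relations contains eight elements and has the presentation $$M_{\mathcal{ST}}=\langle \mathcal{S},\mathcal{T}\mid \mathcal{TS}=\mathcal{ST},\ \mathcal{S}^3=\mathcal{ST},\ \mathcal{T}^4=\mathcal{T}^3,\ \mathcal{TS}^2=\mathcal{T}^2,\ \mathcal{ST}^3=\mathcal{ST}^2\rangle.$$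
   Context: Indices $n$ of $n_M,n_m$ are taken modulo 12; the elements of $H$ are formal labels (musically: major, minor and augmented triads; $\mathcal{S}$ and $\mathcal{T}$ are Douthett's parsimonious relations $\mathcal{P}_{1,0}$ and $\mathcal{P}_{2,0}$). Composition of relations: $\mathcal{R}'\mathcal{R}=\mathcal{R}'\circ\mathcal{R}$ is the set of pairs $(x,z)$ such that there exists $y$ with $(x,y)\in\mathcal{R}$ and $(y,z)\in\mathcal{R}'$; juxtaposition in the presentation denotes this composition, and the monoid identity is the identity relation on $H$. *)

(* Defs.v *)
From Stdlib Require List.
From mathcomp Require Import all_boot.
Set Implicit Arguments. Unset Strict Implicit. Unset Printing Implicit Defensive.

Definition H : finType := (('I_12 + 'I_12) + 'I_4)%type.
Definition maj (n : 'I_12) : H := inl (inl n).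
Definition mnr (n : 'I_12) : H := inl (inr n).
Definition aug (k : 'I_4) : H := inr k.

Definition sh (n : 'I_12) (k : nat) : 'I_12 := inord ((n + k) %% 12).
Definition m4 (k : nat) : 'I_4 := inord (k %% 4).

Definition relH := {set (H * H)}.

(* Composition: comp R' R = R' o R = {(x,z) | exists y, (x,y) in R, (y,z) in R'} *)
Definition comp (R' R : relH) : relH :=
  [set p | [exists y : H, ((p.1, y) \in R) && ((y, p.2) \in R')]].
Definition idrel : relH := [set p | p.1 == p.2].

Definition symc (R : relH) : relH := [set p | (p \in R) || ((p.2, p.1) \in R)].

Definition S0 : relH := [set p | [exists n : 'I_12,
  [|| p == (maj n, mnr n), p == (maj n, mnr (sh n 4)), p == (maj n, aug (m4 n)),
      p == (mnr n, maj n), p == (mnr n, maj (sh n 8))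
    | p == (mnr n, aug (m4 (n + 3)))]]].
Definition Srel : relH := symc S0.

Definition T0 : relH := [set p | [exists n : 'I_12,
  [|| p == (maj n, maj (sh n 4)), p == (maj n, maj (sh n 8)),
      p == (maj n, mnr (sh n 1)), p == (maj n, mnr (sh n 5)),
      p == (maj n, aug (m4 (n + 3))),
      p == (mnr n, mnr (sh n 4)), p == (mnr n, mnr (sh n 8)),
      p == (mnr n, maj (sh n 11)), p == (mnr n, maj (sh n 7))
    | p == (mnr n, aug (m4 n))]]].
Definition Trel : relH := symc T0.

(* Words in the generators S and T (juxtaposition = composition). *)
Inductive gen := gS | gT.
Definition gen_rel (g : gen) : relH := if g is gS then Srel else Trel.
Fixpoint evalw (w : seq gen) : relH :=
  if w is g :: w' then comp (gen_rel g) (evalw w') else idrel.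

Definition in_MST (R : relH) : Prop := exists w : seq gen, evalw w = R.

Definition ST_relations : seq (seq gen * seq gen) :=
  [:: ([:: gT; gS], [:: gS; gT]);
      ([:: gS; gS; gS], [:: gS; gT]);
      ([:: gT; gT; gT; gT], [:: gT; gT; gT]);
      ([:: gT; gS; gS], [:: gT; gT]);
      ([:: gS; gT; gT; gT], [:: gS; gT; gT])].

Inductive ST_cong : seq gen -> seq gen -> Prop :=
| cong_step u v l r : List.In (l, r) ST_relations -> ST_cong (u ++ l ++ v) (u ++ r ++ v)
| cong_refl w : ST_cong w w
| cong_sym w1 w2 : ST_cong w1 w2 -> ST_cong w2 w1
| cong_trans w1 w2 w3 : ST_cong w1 w2 -> ST_cong w2 w3 -> ST_cong w1 w3.

(* Main.v *)
Require Import Defs.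
From mathcomp Require Import all_boot.
Set Implicit Arguments. Unset Strict Implicit. Unset Printing Implicit Defensive.

Inductive E := e1 | eS | eT | eSS | eST | eTT | eSTT | eTTT.
Definition word (e : E) : seq gen :=
  match e with
  | e1 => [::] | eS => [:: gS] | eT => [:: gT] | eSS => [:: gS; gS]
  | eST => [:: gS; gT] | eTT => [:: gT; gT] | eSTT => [:: gS; gT; gT]
  | eTTT => [:: gT; gT; gT]
  end.
Lemma case_S_e1 : ST_cong (gS :: word e1) (word eS).
Proof.

  exact: cong_refl.
Qed.

Lemma case_S_eS : ST_cong (gS :: word eS) (word eSS).
Proof.

  exact: cong_refl.
Qed.

Lemma case_S_eT : ST_cong (gS :: word eT) (word eST).
Proof.

  exact: cong_refl.
Qed.

Lemma case_S_eSS : ST_cong (gS :: word eSS) (word eST).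
Proof.
  apply: (@cong_trans _ [:: gS; gT]); first exact: (@cong_step [::] [::] [:: gS; gS; gS] [:: gS; gT] ltac:(simpl; tauto)).
  exact: cong_refl.
Qed.

Lemma case_S_eST : ST_cong (gS :: word eST) (word eTT).
Proof.
  apply: (@cong_trans _ [:: gS; gT; gS]); first exact: (cong_sym (@cong_step [:: gS] [::] [:: gT; gS] [:: gS; gT] ltac:(simpl; tauto))).
  apply: (@cong_trans _ [:: gT; gS; gS]); first exact: (cong_sym (@cong_step [::] [:: gS] [:: gT; gS] [:: gS; gT] ltac:(simpl; tauto))).
  apply: (@cong_trans _ [:: gT; gT]); first exact: (@cong_step [::] [::] [:: gT; gS; gS] [:: gT; gT] ltac:(simpl; tauto)).
  exact: cong_refl.
Qed.

Lemma case_S_eTT : ST_cong (gS :: word eTT) (word eSTT).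
Proof.

  exact: cong_refl.
Qed.

Lemma case_S_eSTT : ST_cong (gS :: word eSTT) (word eTTT).
Proof.
  apply: (@cong_trans _ [:: gS; gT; gS; gT]); first exact: (cong_sym (@cong_step [:: gS] [:: gT] [:: gT; gS] [:: gS; gT] ltac:(simpl; tauto))).
  apply: (@cong_trans _ [:: gT; gS; gS; gT]); first exact: (cong_sym (@cong_step [::] [:: gS; gT] [:: gT; gS] [:: gS; gT] ltac:(simpl; tauto))).
  apply: (@cong_trans _ [:: gT; gT; gT]); first exact: (@cong_step [::] [:: gT] [:: gT; gS; gS] [:: gT; gT] ltac:(simpl; tauto)).
  exact: cong_refl.
Qed.

Lemma case_S_eTTT : ST_cong (gS :: word eTTT) (word eSTT).
Proof.
  apply: (@cong_trans _ [:: gS; gT; gT]); first exact: (@cong_step [::] [::] [:: gS; gT; gT; gT] [:: gS; gT; gT] ltac:(simpl; tauto)).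
  exact: cong_refl.
Qed.

Lemma case_T_e1 : ST_cong (gT :: word e1) (word eT).
Proof.

  exact: cong_refl.
Qed.

Lemma case_T_eS : ST_cong (gT :: word eS) (word eST).
Proof.
  apply: (@cong_trans _ [:: gS; gT]); first exact: (@cong_step [::] [::] [:: gT; gS] [:: gS; gT] ltac:(simpl; tauto)).
  exact: cong_refl.
Qed.

Lemma case_T_eT : ST_cong (gT :: word eT) (word eTT).
Proof.

  exact: cong_refl.
Qed.

Lemma case_T_eSS : ST_cong (gT :: word eSS) (word eTT).
Proof.
  apply: (@cong_trans _ [:: gT; gT]); first exact: (@cong_step [::] [::] [:: gT; gS; gS] [:: gT; gT] ltac:(simpl; tauto)).
  exact: cong_refl.
Qed.

Lemma case_T_eST : ST_cong (gT :: word eST) (word eSTT).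
Proof.
  apply: (@cong_trans _ [:: gS; gT; gT]); first exact: (@cong_step [::] [:: gT] [:: gT; gS] [:: gS; gT] ltac:(simpl; tauto)).
  exact: cong_refl.
Qed.

Lemma case_T_eTT : ST_cong (gT :: word eTT) (word eTTT).
Proof.

  exact: cong_refl.
Qed.

Lemma case_T_eSTT : ST_cong (gT :: word eSTT) (word eSTT).
Proof.
  apply: (@cong_trans _ [:: gS; gT; gT; gT]); first exact: (@cong_step [::] [:: gT; gT] [:: gT; gS] [:: gS; gT] ltac:(simpl; tauto)).
  apply: (@cong_trans _ [:: gS; gT; gT]); first exact: (@cong_step [::] [::] [:: gS; gT; gT; gT] [:: gS; gT; gT] ltac:(simpl; tauto)).
  exact: cong_refl.
Qed.

Lemma case_T_eTTT : ST_cong (gT :: word eTTT) (word eTTT).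
Proof.
  apply: (@cong_trans _ [:: gT; gT; gT]); first exact: (@cong_step [::] [::] [:: gT; gT; gT; gT] [:: gT; gT; gT] ltac:(simpl; tauto)).
  exact: cong_refl.
Qed.

Definition mul (g : gen) (e : E) : E :=
  match g, e with
  | gS, e1 => eS
  | gS, eS => eSS
  | gS, eT => eST
  | gS, eSS => eST
  | gS, eST => eTT
  | gS, eTT => eSTT
  | gS, eSTT => eTTT
  | gS, eTTT => eSTT
  | gT, e1 => eT
  | gT, eS => eST
  | gT, eT => eTT
  | gT, eSS => eTT
  | gT, eST => eSTT
  | gT, eTT => eTTT
  | gT, eSTT => eSTT
  | gT, eTTT => eTTT
  end.

Lemma mulP g e : ST_cong (g :: word e) (word (mul g e)).
Proof.
case: g; case: e.
- exact: case_S_e1.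
- exact: case_S_eS.
- exact: case_S_eT.
- exact: case_S_eSS.
- exact: case_S_eST.
- exact: case_S_eTT.
- exact: case_S_eSTT.
- exact: case_S_eTTT.
- exact: case_T_e1.
- exact: case_T_eS.
- exact: case_T_eT.
- exact: case_T_eSS.
- exact: case_T_eST.
- exact: case_T_eTT.
- exact: case_T_eSTT.
- exact: case_T_eTTT.
Qed.

Fixpoint nf (w : seq gen) : E := if w is g :: w' then mul g (nf w') else e1.

Lemma cong_cons g w w' : ST_cong w w' -> ST_cong (g :: w) (g :: w').
Proof.
elim=> [u v l r H| x | x y _ IH | x y z _ IH1 _ IH2].
- exact: (@cong_step (g :: u) v l r H).
- exact: cong_refl.
- exact: cong_sym IH.
- exact: cong_trans IH1 IH2.
Qed.

Lemma nfP w : ST_cong w (word (nf w)).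
Proof.
elim: w => [|g w IH] /=; first exact: cong_refl.
apply: cong_trans (cong_cons g IH) _; exact: mulP.
Qed.

Lemma comp_assoc A B C : Defs.comp A (Defs.comp B C) = Defs.comp (Defs.comp A B) C.
Proof.
apply/setP=> [[x z]]; rewrite !inE /=; apply/existsP/existsP.
- case=> y /andP[]; rewrite inE => /existsP[w /andP[h1 h2]] h3.
  exists w; rewrite h1 /= inE; apply/existsP; exists y; by rewrite h2.
- case=> y /andP[h1]; rewrite inE => /existsP[w /andP[h2 h3]].
  exists w; rewrite h3 andbT inE; apply/existsP; exists y; by rewrite h1.
Qed.

Lemma comp_idl R : Defs.comp idrel R = R.
Proof.
apply/setP=> [[x z]]; rewrite !inE /=; apply/existsP/idP.
- by case=> y /andP[h]; rewrite inE /= => /eqP <-.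
- by move=> h; exists z; rewrite h inE /=.
Qed.

Lemma comp_idr R : Defs.comp R idrel = R.
Proof.
apply/setP=> [[x z]]; rewrite !inE /=; apply/existsP/idP.
- by case=> y /andP[]; rewrite inE /= => /eqP <-.
- by move=> h; exists x; rewrite inE /= eqxx h.
Qed.

Lemma evalw_cat a b : evalw (a ++ b) = Defs.comp (evalw a) (evalw b).
Proof.
elim: a => [|g a IH] /=; first by rewrite comp_idl.
by rewrite IH comp_assoc.
Qed.

Definition code (x : H) : nat :=
  match x with
  | inl (inl n) => nat_of_ord n
  | inl (inr n) => 12 + nat_of_ord n
  | inr k => 24 + nat_of_ord k
  end.

Definition decode (c : nat) : H :=
  if c < 12 then maj (inord c) else if c < 24 then mnr (inord (c - 12))
  else aug (inord (c - 24)).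

Lemma code_lt x : code x < 28.
Proof.
case: x => [[n|n]|k] /=.
- by apply: (leq_trans (ltn_ord n)).
- by rewrite ltn_add2l (leq_trans (ltn_ord n)).
- by rewrite ltn_add2l (leq_trans (ltn_ord k)).
Qed.

Lemma codeK x : decode (code x) = x.
Proof.
rewrite /decode; case: x => [[n|n]|k] /=.
- by rewrite ltn_ord /maj inord_val.
- by rewrite ltn_add2l ltn_ord addKn /mnr inord_val.
- by rewrite addKn /aug inord_val.
Qed.

Lemma decodeK c : c < 28 -> code (decode c) = c.
Proof.
move=> hc; rewrite /decode.
case: ifP => h1; first by rewrite /= inordK.
case: ifP => h2.
  rewrite /= inordK; first by rewrite subnKC // leqNgt h1.
  by rewrite ltn_subLR // leqNgt h1.
rewrite /= inordK; first by rewrite subnKC // leqNgt h2.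
by rewrite ltn_subLR // leqNgt h2.
Qed.

Lemma code_inj : injective code.
Proof. by move=> x y h; rewrite -(codeK x) h codeK. Qed.

Lemma existsH (Q : nat -> bool) : [exists y : H, Q (code y)] = has Q (iota 0 28).
Proof.
apply/existsP/hasP.
- case=> y hy; exists (code y) => //; by rewrite mem_iota code_lt.
- case=> c; rewrite mem_iota add0n => /andP[_ hc] hq.
  by exists (decode c); rewrite decodeK.
Qed.

Lemma exists12 (Q : nat -> bool) : [exists n : 'I_12, Q (nat_of_ord n)] = has Q (iota 0 12).
Proof.
apply/existsP/hasP.
- case=> n hn; exists (nat_of_ord n) => //; by rewrite mem_iota ltn_ord.
- case=> c; rewrite mem_iota add0n => /andP[_ hc] hq.
  by exists (Ordinal hc).
Qed.

Definition mat := seq (seq bool).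
Definition mk (f : nat -> nat -> bool) : mat :=
  [seq [seq f a b | b <- iota 0 28] | a <- iota 0 28].
Definition get (M : mat) a b := nth false (nth [::] M a) b.

Lemma get_mk f a b : a < 28 -> b < 28 -> get (mk f) a b = f a b.
Proof.
move=> ha hb; rewrite /get /mk (nth_map 0) ?size_iota // nth_iota //.
by rewrite (nth_map 0) ?size_iota // nth_iota.
Qed.

Lemma mk_eq f g : mk f = mk g <-> (forall a b, a < 28 -> b < 28 -> f a b = g a b).
Proof.
split=> [h a b ha hb|h]; first by rewrite -get_mk // h get_mk.
apply/eq_in_map => a; rewrite mem_iota add0n => /andP[_ ha].
apply/eq_in_map => b; rewrite mem_iota add0n => /andP[_ hb].
exact: h.
Qed.

Definition pe (p q : nat * nat) := (p.1 == q.1) && (p.2 == q.2).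

Definition S0n (a b : nat) : bool := has (fun n =>
  [|| pe (a,b) (n, 12 + n), pe (a,b) (n, 12 + (n + 4) %% 12), pe (a,b) (n, 24 + n %% 4),
      pe (a,b) (12 + n, n), pe (a,b) (12 + n, (n + 8) %% 12)
    | pe (a,b) (12 + n, 24 + (n + 3) %% 4)]) (iota 0 12).

Definition T0n (a b : nat) : bool := has (fun n =>
  [|| pe (a,b) (n, (n + 4) %% 12), pe (a,b) (n, (n + 8) %% 12),
      pe (a,b) (n, 12 + (n + 1) %% 12), pe (a,b) (n, 12 + (n + 5) %% 12),
      pe (a,b) (n, 24 + (n + 3) %% 4),
      pe (a,b) (12 + n, 12 + (n + 4) %% 12), pe (a,b) (12 + n, 12 + (n + 8) %% 12),
      pe (a,b) (12 + n, (n + 11) %% 12), pe (a,b) (12 + n, (n + 7) %% 12)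
    | pe (a,b) (12 + n, 24 + n %% 4)]) (iota 0 12).

Definition gmat (g : gen) : mat :=
  if g is gS then mk (fun a b => S0n a b || S0n b a)
  else mk (fun a b => T0n a b || T0n b a).

Definition mcomp (M' M : mat) : mat :=
  mk (fun a c => has (fun b => get M a b && get M' b c) (iota 0 28)).

Fixpoint fev (w : seq gen) : mat :=
  if w is g :: w' then mcomp (gmat g) (fev w') else mk (fun a b => a == b).

Lemma peE (p q : H * H) : (p == q) = pe (code p.1, code p.2) (code q.1, code q.2).
Proof.
case: p q => [x y] [x' y']; rewrite /pe /= xpair_eqE.
by rewrite !(inj_eq code_inj).
Qed.

Lemma code_sh n k : nat_of_ord (sh n k) = (n + k) %% 12.
Proof. by rewrite /sh inordK // ltn_pmod. Qed.
Lemma code_m4 k : nat_of_ord (m4 k) = k %% 4.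
Proof. by rewrite /m4 inordK // ltn_pmod. Qed.

Lemma S0E p : (p \in S0) = S0n (code p.1) (code p.2).
Proof.
rewrite inE /S0n -exists12; apply: eq_existsb => n.
by rewrite !peE /= !code_sh !code_m4.
Qed.

Lemma T0E p : (p \in T0) = T0n (code p.1) (code p.2).
Proof.
rewrite inE /T0n -exists12; apply: eq_existsb => n.
by rewrite !peE /= !code_sh !code_m4.
Qed.

Lemma genE g x y : ((x, y) \in gen_rel g) = get (gmat g) (code x) (code y).
Proof.
case: g => /=; rewrite get_mk ?code_lt // inE.
- by rewrite !S0E.
- by rewrite !T0E.
Qed.

Lemma fevE w x y : ((x, y) \in evalw w) = get (fev w) (code x) (code y).
Proof.
elim: w x y => [|g w IH] x y /=.
  by rewrite get_mk ?code_lt // inE /= (inj_eq code_inj).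
rewrite /mcomp get_mk ?code_lt // inE /=.
transitivity [exists z : H, get (fev w) (code x) (code z) && get (gmat g) (code z) (code y)].
  by apply: eq_existsb => z; rewrite IH genE.
exact: (existsH (fun b => get (fev w) (code x) b && get (gmat g) b (code y))).
Qed.

Lemma fev_mk w : exists f, fev w = mk f.
Proof. by case: w => [|g w] /=; eexists; reflexivity. Qed.

Lemma evalw_fev u v : evalw u = evalw v <-> fev u = fev v.
Proof.
split=> h.
- have [f hf] := fev_mk u; have [g hg] := fev_mk v.
  rewrite hf hg; apply/mk_eq => a b ha hb.
  by rewrite -get_mk // -hf -[a](decodeK ha) -[b](decodeK hb) -fevE h fevE hg get_mk // !decodeK.
- by apply/setP=> [[x y]]; rewrite !fevE h.
Qed.

Lemma all_In T (P : pred T) s x : all P s -> List.In x s -> P x.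
Proof.
elim: s => [|y s IH] //= /andP[hy hs] [<-|hx] //; exact: IH.
Qed.

Lemma rels_ok : all (fun p => fev p.1 == fev p.2) ST_relations.
Proof. by vm_compute. Qed.

Lemma sound u v : ST_cong u v -> evalw u = evalw v.
Proof.
elim=> [u' v' l r H| x | x y _ IH | x y z _ IH1 _ IH2] //; last by rewrite IH1.
rewrite !evalw_cat; congr Defs.comp; congr Defs.comp.
apply/evalw_fev; apply/eqP; exact: (all_In rels_ok H).
Qed.

Definition allE := [:: e1; eS; eT; eSS; eST; eTT; eSTT; eTTT].
Definition eidx e := match e with
  e1 => 0 | eS => 1 | eT => 2 | eSS => 3 | eST => 4 | eTT => 5 | eSTT => 6 | eTTT => 7 end.
Lemma eidxK e : nth e1 allE (eidx e) = e. Proof. by case: e. Qed.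
Lemma eidx_lt e : eidx e < size allE. Proof. by case: e. Qed.
Lemma uniqF : uniq (map (fun e => fev (word e)) allE).
Proof. by vm_compute. Qed.

Lemma word_inj e e' : evalw (word e) = evalw (word e') -> e = e'.
Proof.
move/evalw_fev=> h.
have hl : forall e, eidx e < size (map (fun e => fev (word e)) allE).
  by move=> e0; rewrite size_map eidx_lt.
have := nth_uniq [::] (hl e) (hl e') uniqF.
rewrite !(nth_map e1) ?eidx_lt // !eidxK h eqxx => /esym/eqP he.
by rewrite -(eidxK e) he eidxK.
Qed.

Definition relF (R : relH) : mat := mk (fun a c => (decode a, decode c) \in R).
Lemma fev_rel w : fev w = relF (evalw w).
Proof.
have [f hf] := fev_mk w; rewrite hf; apply/mk_eq => a b ha hb.
by rewrite fevE !decodeK // hf get_mk.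
Qed.

Theorem mainTheorem4 :
  (exists l : seq relH, [/\ uniq l, size l = 8 & forall R : relH, in_MST R <-> R \in l])
  /\ (forall u v : seq gen, evalw u = evalw v <-> ST_cong u v).
Proof.
split.
  pose es := allE.
  exists (map (fun e => evalw (word e)) es); split => //.
    apply: (@map_uniq _ _ relF); rewrite -map_comp.
    have -> : map (relF \o (fun e => evalw (word e))) es = map (fun e => fev (word e)) allE.
      by apply: eq_map => e /=; rewrite fev_rel.
    exact: uniqF.
  move=> R; split.
    case=> w <-; rewrite (sound (nfP w)).
    apply/(nthP (evalw [::])); exists (eidx (nf w)); first by rewrite size_map eidx_lt.
    by rewrite (nth_map e1) ?eidx_lt // eidxK.
  case/(nthP (evalw [::])) => i hi <-.
  rewrite size_map in hi.
  by exists (word (nth e1 allE i)); rewrite (nth_map e1).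
move=> u v; split; last exact: sound.
move=> h.
have: nf u = nf v.
  by apply: word_inj; rewrite -(sound (nfP u)) -(sound (nfP v)).
move=> e; apply: cong_trans (nfP u) _; rewrite e; apply: cong_sym; exact: nfP.
Qed.
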